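(* Let $\Delta$ be a finite simplicial complex, $\mathbb{D}$ a PID, $(L,\leq)$ a CDL in which $0$ is meet-prime, and $\mu$ an $L$-fuzzy subcomplex of $\Delta$ with $\mu^*=\Delta$. Then the $L$-fuzzy $d$-homology $\eta_d$ of $\mu$ is an $L$-fuzzy submodule of $H_d=Z_d/B_d$ (i.e. $\langle\zeta_d^*\rangle=Z_d$, $\langle\beta_d^*\rangle=B_d$), and for every $[h]\in H_d$, $$\eta_d([h])=\bigvee\{\zeta_d(z)\mid z\in[h]\}=\bigvee\{\kappa_d(z)\mid z\in[h]\}.$$ Moreover $\eta_d([h])>0$ for all $[h]\in H_d$, i.e. $\eta_d^*=H_d$.
   Context: CDL: a poset where every subset has a join $\bigvee$ and meet $\bigwedge$, with arbitrary meets and joins distributing; $0=\bigvee\emptyset$, $1=\bigwedge\emptyset$. $0$ is meet-prime if $a\wedge b=0$ implies $a=0$ or $b=0$. An $L$-fuzzy subcomplex of $\Delta$ is $\mu:\Delta\to L$ with $\mu(\sigma_1)\geq\mu(\sigma_2)$ whenever $\sigma_1$ is a face of $\sigma_2$; $\mu^*=\{\sigma\mid\mu(\sigma)\neq0\}$. An $L$-fuzzy submodule of a $\mathbb{D}$-module $M$ is $\nu:M\to L$ with $\nu(0)=1$, $\nu(m_1+m_2)\geq\nu(m_1)\wedge\nu(m_2)$, $\nu(am)\geq\nu(m)$; $\langle\nu\rangle$ is the pointwise meet of all $L$-fuzzy submodules containing $\nu$; $\langle S\rangle$ the submodule generated by a set $S$; $\nu^*=\{x\mid\nu(x)\neq0\}$.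 Chains: with an ordering of vertices, $\sigma^d_1,\dots,\sigma^d_{n_d}$ are the positively oriented $d$-simplices, $C_d$ the free $\mathbb{D}$-module on them, $\partial_d$ the usual boundary, $Z_d=\ker\partial_d$, $B_d=\operatorname{im}\partial_{d+1}$, $H_d=Z_d/B_d$, $[h]=h+B_d$. Fuzzy homology of $\mu$: $\delta_d(\sigma^d_i)=\mu(\sigma^d_i)$ and $\delta_d=0$ off the basis; $\kappa_d=\langle\delta_d\rangle$; $\zeta_d(c)=\kappa_d(c)$ if $\partial_dc=0$, else $0$; $\beta_d(c)=\kappa_d(c)\wedge\bigvee\{\kappa_{d+1}(a)\mid\partial_{d+1}a=c\}$; and $\eta_d=\zeta_d/\beta_d$ is the map on $\langle\zeta_d^*\rangle/\langle\beta_d^*\rangle$ given by $\eta_d(m+\langle\beta_d^*\rangle)=\bigvee\{\zeta_d(n)\mid n\in m+\langle\beta_d^*\rangle\}$. *)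

(* Defs.v *)
From HB Require Import structures.
From mathcomp Require Import all_boot all_order all_algebra.
Set Implicit Arguments. Unset Strict Implicit. Unset Printing Implicit Defensive.
Import Order.TTheory GRing.Theory.
Local Open Scope ring_scope.
Local Open Scope order_scope.

Definition ideal_of (R : idomainType) (I : R -> Prop) : Prop :=
  [/\ I 0, (forall x y, I x -> I y -> I (x + y)),
      (forall x, I x -> I (- x)) & (forall r x, I x -> I (r * x))].

Definition PID (R : idomainType) : Prop :=
  forall I : R -> Prop, ideal_of I -> exists a : R, forall x, I x <-> exists r, x = r * a.

Definition CDL (disp : Order.disp_t) (L : latticeType disp)
    (sup inf : (L -> Prop) -> L) : Prop :=
  [/\ (forall S : L -> Prop, (forall x, S x -> x <= sup S) /\
          (forall u, (forall x, S x -> x <= u) -> sup S <= u)),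
      (forall S : L -> Prop, (forall x, S x -> inf S <= x) /\
          (forall u, (forall x, S x -> u <= x) -> u <= inf S)),
      (forall (a : L) (S : L -> Prop),
          Order.meet a (sup S) = sup (fun y => exists2 x, S x & y = Order.meet a x)) &
      (forall (a : L) (S : L -> Prop),
          Order.join a (inf S) = inf (fun y => exists2 x, S x & y = Order.join a x))].

Definition botL (disp : Order.disp_t) (L : latticeType disp) (sup : (L -> Prop) -> L) : L :=
  sup (fun _ => False).
Definition topL (disp : Order.disp_t) (L : latticeType disp) (inf : (L -> Prop) -> L) : L :=
  inf (fun _ => False).

(* 0 is meet-prime: (as for any prime element) 0 <> 1, and a /\ b = 0 -> a = 0 \/ b = 0 *)
Definition zero_meet_prime (disp : Order.disp_t) (L : latticeType disp)
    (sup inf : (L -> Prop) -> L) : Prop :=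
  botL sup <> topL inf /\
  forall a b : L, Order.meet a b = botL sup -> a = botL sup \/ b = botL sup.

Definition simplicial_complex (n : nat) (Delta : {set {set 'I_n}}) : Prop :=
  set0 \notin Delta /\
  forall s t : {set 'I_n}, s \in Delta -> t \subset s -> t != set0 -> t \in Delta.

Definition fuzzy_subcomplex (n : nat) (Delta : {set {set 'I_n}})
    (disp : Order.disp_t) (L : latticeType disp) (mu : {set 'I_n} -> L) : Prop :=
  forall s1 s2, s1 \in Delta -> s2 \in Delta -> s1 \subset s2 -> mu s2 <= mu s1.

Section FuzzyHomology.
Variables (n : nat) (Delta : {set {set 'I_n}}) (R : idomainType).
Variables (disp : Order.disp_t) (L : latticeType disp) (sup inf : (L -> Prop) -> L).
Variable mu : {set 'I_n} -> L.

Local Notation bot := (botL sup).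
Local Notation top := (topL inf).

(* chains: functions from (sets of vertices) to R; a simplex s is identified
   with its positively oriented version (vertices in increasing order). *)
Definition chain := {ffun {set 'I_n} -> R}.

Definition scalec (a : R) (c : chain) : chain := [ffun s => a * c s].

Definition elem (sigma : {set 'I_n}) : chain := [ffun s => (s == sigma)%:R].

Definition Cd (d : nat) (c : chain) : bool :=
  [forall s, (c s != 0) ==> (s \in Delta) && (#|s| == d.+1)%N].

(* incidence number [t : s] = (-1)^i if t is s with its i-th vertex removed *)
Definition incid (t s : {set 'I_n}) : R :=
  \sum_(v in s | t == s :\ v) (-1) ^+ #|[set u in s | (u < v)%N]|.

Definition bd (d : nat) (c : chain) : chain :=
  [ffun t => if (t \in Delta) && (#|t| == d)%N then
               \sum_(s in Delta | #|s| == d.+1) c s * incid t s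
             else 0].

Definition Zd (d : nat) (c : chain) : bool := Cd d c && (bd d c == 0).
Definition Bd (d : nat) (c : chain) : Prop := exists2 a, Cd d.+1 a & bd d.+1 a = c.

Definition submodule (P : chain -> Prop) : Prop :=
  [/\ P 0, (forall x y, P x -> P y -> P (x + y)) & (forall a x, P x -> P (scalec a x))].

Definition gen_sub (S : chain -> Prop) (x : chain) : Prop :=
  forall P, submodule P -> (forall y, S y -> P y) -> P x.

Definition fuzzy_submodule (P : chain -> Prop) (nu : chain -> L) : Prop :=
  [/\ nu 0 = top,
      (forall x y, P x -> P y -> Order.meet (nu x) (nu y) <= nu (x + y)) &
      (forall a x, P x -> nu x <= nu (scalec a x))].

Definition gen_fuzzy (P : chain -> Prop) (f : chain -> L) (x : chain) : L :=
  inf (fun l => exists nu, [/\ fuzzy_submodule P nu, (forall y, P y -> f y <= nu y) & l = nu x]).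

Definition supp (f : chain -> L) (x : chain) : Prop := f x <> bot.

Definition delta (d : nat) (c : chain) : L :=
  sup (fun l => exists sigma, [/\ sigma \in Delta, #|sigma| = d.+1 & c = elem sigma /\ l = mu sigma]).

Definition kappa (d : nat) : chain -> L := gen_fuzzy (Cd d) (delta d).

Definition zeta (d : nat) (c : chain) : L := if Zd d c then kappa d c else bot.

Definition beta (d : nat) (c : chain) : L :=
  if Cd d c then
    Order.meet (kappa d c) (sup (fun l => exists a, [/\ Cd d.+1 a, bd d.+1 a = c & l = kappa d.+1 a]))
  else bot.

(* eta_d = zeta_d / beta_d, evaluated at the class m + <beta_d^*> (via the representative m) *)
Definition eta_hom (d : nat) (m : chain) : L :=
  sup (fun l => exists nn, gen_sub (supp (beta d)) (nn - m) /\ l = zeta d nn).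

End FuzzyHomology.

(* Main.v *)
Require Import Defs.
From HB Require Import structures.
From mathcomp Require Import all_boot all_order all_algebra.
Import Order.TTheory GRing.Theory.
Local Open Scope ring_scope.

Section Chains.
Variables (n : nat) (Delta : {set {set 'I_n}}) (R : idomainType).
Local Notation chain := (chain n R).

Lemma Cd0 d : Cd Delta d (0 : chain).
Proof. by apply/forallP => s; rewrite ffunE eqxx. Qed.

Lemma CdD d (x y : chain) : Cd Delta d x -> Cd Delta d y -> Cd Delta d (x + y).
Proof.
move=> /forallP hx /forallP hy; apply/forallP => s; rewrite ffunE.
apply/implyP => hs.
have [hx0|hx0] := eqVneq (x s) 0.
  by move: hs; rewrite hx0 add0r => hs; exact: (implyP (hy s) hs).
exact: (implyP (hx s) hx0).
Qed.

Lemma CdZ d a (x : chain) : Cd Delta d x -> Cd Delta d (scalec a x).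
Proof.
move=> /forallP hx; apply/forallP => s; rewrite ffunE.
apply/implyP => hs; apply: (implyP (hx s)).
by apply: contraNneq hs => ->; rewrite mulr0.
Qed.

Lemma bd0 d : bd Delta d (0 : chain) = 0.
Proof.
apply/ffunP => t; rewrite !ffunE; case: ifP => // _.
by apply: big1 => s _; rewrite ffunE mul0r.
Qed.

Lemma bdD d (x y : chain) : bd Delta d (x + y) = bd Delta d x + bd Delta d y.
Proof.
apply/ffunP => t; rewrite !ffunE; case: ifP => _; last by rewrite addr0.
by rewrite -big_split; apply: eq_bigr => s _; rewrite ffunE mulrDl.
Qed.

Lemma bdZ d a (x : chain) : bd Delta d (scalec a x) = scalec a (bd Delta d x).
Proof.
apply/ffunP => t; rewrite !ffunE; case: ifP => _; last by rewrite mulr0.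
by rewrite mulr_sumr; apply: eq_bigr => s _; rewrite ffunE mulrA.
Qed.

Lemma bdCd d (a : chain) : Cd Delta d (bd Delta d.+1 a).
Proof.
apply/forallP => s; rewrite ffunE; apply/implyP.
by case: ifP => // _; rewrite eqxx.
Qed.

Definition sgn (s : {set 'I_n}) (v : 'I_n) : R :=
  (-1) ^+ #|[set u in s | (u < v)%N]|.

Lemma incid_pair (u s : {set 'I_n}) :
  \sum_(v in s) sgn s v * incid R u (s :\ v) = 0.
Proof.
rewrite /incid.
under eq_bigr => v _ do rewrite mulr_sumr.
rewrite pair_big_dep /=.
rewrite (bigID (fun p : 'I_n * 'I_n => (p.1 < p.2)%N)) /=.
rewrite [X in _ + X](reindex_inj (h := fun p : 'I_n * 'I_n => (p.2, p.1))); last first.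
  by move=> [a b] [c e] [-> ->].
rewrite /= [X in _ + X](eq_bigl (fun p : 'I_n * 'I_n => [&& p.1 \in s, p.2 \in s :\ p.1
     & u == s :\ p.1 :\ p.2] && (p.1 < p.2)%N)); last first.
  move=> [a b] /=; rewrite !in_setD1.
  have -> : s :\ b :\ a = s :\ a :\ b by rewrite !setDDl setUC.
  case: (ltngtP a b) => hab.
  - have hne : (a != b) by apply/eqP => e; move: hab; rewrite e ltnn.
    rewrite andbT /=.
    case: (a \in s); case: (b \in s) => //=; rewrite ?andbF //.
    case: (@eqP _ a b) => [e|_]; first by move: hab; rewrite e ltnn.
    case: (@eqP _ b a) => [e|_]; first by move: hab; rewrite e ltnn.
    by rewrite /= !andbT.
  - by rewrite !andbF.
  - have e : a = b by apply: val_inj.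
    by subst b; rewrite eqxx /= !andbF.
rewrite -big_split /=.
apply: big1 => [[a b]] /= /andP [/and3P [ha hb _] hab].
rewrite in_setD1 in hb; case/andP: hb => _ hb.
rewrite /sgn.
have e1 : [set u0 in s :\ b | (u0 < a)%N] = [set u0 in s | (u0 < a)%N].
  apply/setP => x; rewrite !inE; case: (ltnP x a) => hx; rewrite ?andbF //.
  by rewrite andbT andbC; case: (x \in s) => //=; apply/negP => /eqP hxb; move: hx; rewrite hxb ltnNge (ltnW hab).
have e2 : #|[set u0 in s | (u0 < b)%N]| = #|[set u0 in s :\ a | (u0 < b)%N]|.+1.
  rewrite (cardsD1 a) inE ha hab; congr (_.+1); apply: eq_card => x.
  by rewrite !inE; case: (x == a); case: (x \in s).
by rewrite e1 e2 exprS mulN1r mulNr [X in _ - X]mulrC subrr.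
Qed.

Lemma bdbd d (a : chain) : simplicial_complex Delta -> bd Delta d (bd Delta d.+1 a) = 0.
Proof.
move=> [h0 hsub]; apply/ffunP => u; rewrite !ffunE; case: ifP => // _.
transitivity (\sum_(t in Delta | #|t| == d.+1) \sum_(s in Delta | #|s| == d.+2)
   a s * incid R t s * incid R u t).
  by apply: eq_bigr => t /andP[ht1 ht2]; rewrite ffunE ht1 ht2 /= mulr_suml.
rewrite exchange_big /=.
apply: big1 => s /andP[hs1 /eqP hs2].
under eq_bigr do rewrite -mulrA.
rewrite -mulr_sumr; apply/eqP; rewrite mulf_eq0; apply/orP; right; apply/eqP.
transitivity (\sum_(t | (t \in Delta) && (#|t| == d.+1))
   \sum_(v | (v \in s) && (t == s :\ v)) sgn s v * incid R u (s :\ v)).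
  apply: eq_bigr => t _; rewrite {1}/incid mulr_suml.
  by apply: eq_bigr => v /andP[_ /eqP ->].
rewrite (exchange_big_dep (fun v => v \in s)) /=; last by move=> t v _ /andP[].
rewrite -[RHS](incid_pair u s); apply: eq_bigr => v hv.
rewrite (big_pred1 (s :\ v)) // => t /=.
rewrite hv /=; case: (@eqP _ t (s :\ v)) => [->|]; last by rewrite andbF.
have hc : #|s :\ v| = d.+1 by move: hs2; rewrite (cardsD1 v) hv => -[].
rewrite hc eqxx andbT /= andbT; apply: hsub hs1 _ _; first exact: subD1set.
by rewrite -cards_eq0 hc.
Qed.
Lemma scalec0 a : scalec a (0 : chain) = 0.
Proof. by apply/ffunP => t; rewrite !ffunE mulr0. Qed.

Lemma elemCd d s : s \in Delta -> #|s| = d.+1 -> Cd Delta d (elem R s).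
Proof.
move=> hs hc; apply/forallP => t; rewrite ffunE; apply/implyP.
by case: (@eqP _ t s) => [->|]; rewrite ?hs ?hc ?eqxx //= eqxx.
Qed.

Lemma Zsub d : submodule (fun x : chain => Zd Delta d x).
Proof.
split.
- by rewrite /Zd Cd0 bd0 eqxx.
- move=> x y /andP[hx /eqP bx] /andP[hy /eqP by'].
  by rewrite /Zd CdD // bdD bx by' addr0 eqxx.
- move=> a x /andP[hx /eqP bx].
  by rewrite /Zd CdZ // bdZ bx scalec0 eqxx.
Qed.

Lemma Bsub d : submodule (Bd Delta (R:=R) d).
Proof.
split.
- by exists 0; [exact: Cd0 | exact: bd0].
- move=> x y [a ha <-] [b hb <-]; exists (a + b); first exact: CdD.
  by rewrite bdD.
- move=> c x [a ha <-]; exists (scalec c a); first exact: CdZ.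
  by rewrite bdZ.
Qed.

Lemma BZ d x : simplicial_complex Delta -> Bd Delta (R:=R) d x -> Zd Delta d x.
Proof. by move=> hs [a ha <-]; rewrite /Zd bdCd bdbd // eqxx. Qed.

Lemma gen_sub_eq (S P : chain -> Prop) : submodule P -> (forall x, S x <-> P x) ->
  forall x, gen_sub S x <-> P x.
Proof.
move=> hP hSP x; split.
- by move=> h; apply: h => // y /hSP.
- by move=> hx Q hQ hSQ; apply: hSQ; apply/hSP.
Qed.

Lemma chain_decomp (x : chain) : x = \sum_(s : {set 'I_n}) scalec (x s) (elem R s).
Proof.
apply/ffunP => t; rewrite sum_ffunE (bigD1 t) //= big1 => [|s hs].
  by rewrite !ffunE eqxx mulr1 addr0.
by rewrite !ffunE eq_sym (negbTE hs) mulr0.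
Qed.

End Chains.

From HB Require Import structures.
From mathcomp Require Import all_boot all_order all_algebra.
From Stdlib Require Import Classical.
Set Implicit Arguments. Unset Strict Implicit. Unset Printing Implicit Defensive.
Import Order.TTheory GRing.Theory.
Local Open Scope ring_scope.
Local Open Scope order_scope.

Section Lat.
Variables (disp : Order.disp_t) (L : latticeType disp) (sup inf : (L -> Prop) -> L).
Hypothesis hC : CDL sup inf.
Local Notation bot := (botL sup).
Local Notation top := (topL inf).

Lemma sup_ub (S : L -> Prop) x : S x -> x <= sup S.
Proof. by case: hC => h _ _ _; case: (h S) => h1 _; apply: h1. Qed.
Lemma sup_lub (S : L -> Prop) u : (forall x, S x -> x <= u) -> sup S <= u.
Proof. by case: hC => h _ _ _; case: (h S) => _ h2; apply: h2. Qed.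
Lemma inf_lb (S : L -> Prop) x : S x -> inf S <= x.
Proof. by case: hC => _ h _ _; case: (h S) => h1 _; apply: h1. Qed.
Lemma inf_glb (S : L -> Prop) u : (forall x, S x -> u <= x) -> u <= inf S.
Proof. by case: hC => _ h _ _; case: (h S) => _ h2; apply: h2. Qed.
Lemma bot_le x : bot <= x.
Proof. by apply: sup_lub. Qed.
Lemma le_top x : x <= top.
Proof. by apply: inf_glb. Qed.
Lemma le_bot x : x <= bot -> x = bot.
Proof. by move=> h; apply/le_anti; rewrite h bot_le. Qed.
Lemma nonbot_le x y : x <= y -> x <> bot -> y <> bot.
Proof. by move=> hxy hx hy; apply: hx; apply: le_bot; rewrite -hy. Qed.
Lemma sup_mono (S T : L -> Prop) : (forall x, S x -> T x) -> sup S <= sup T.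
Proof. by move=> h; apply: sup_lub => x /h; apply: sup_ub. Qed.
Lemma sup_ext (S T : L -> Prop) : (forall x, S x <-> T x) -> sup S = sup T.
Proof. by move=> h; apply/le_anti; rewrite !sup_mono // => x /h. Qed.
Lemma meet_sup a (S : L -> Prop) :
  Order.meet a (sup S) = sup (fun y => exists2 x, S x & y = Order.meet a x).
Proof. by case: hC => _ _ h _; apply: h. Qed.
Lemma meet_bot x : Order.meet x bot = bot.
Proof. by apply: le_bot; apply: leIr. Qed.
Lemma bot_meet x : Order.meet bot x = bot.
Proof. by apply: le_bot; apply: leIl. Qed.
End Lat.

Section Fuzzy.
Variables (n : nat) (Delta : {set {set 'I_n}}) (R : idomainType).
Variables (disp : Order.disp_t) (L : latticeType disp) (sup inf : (L -> Prop) -> L).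
Variable mu : {set 'I_n} -> L.
Hypothesis hC : CDL sup inf.
Hypothesis hZ : zero_meet_prime sup inf.
Hypothesis hsc : simplicial_complex Delta.
Hypothesis hmu : forall s, s \in Delta -> mu s <> botL sup.
Local Notation bot := (botL sup).
Local Notation top := (topL inf).
Local Notation chain := (chain n R).

Section GF.
Variables (P : chain -> Prop) (f : chain -> L).
Local Notation gen := (gen_fuzzy inf P f).

Lemma gf0 : gen 0 = top.
Proof.
apply/le_anti; rewrite (le_top hC) //=; apply: (inf_glb hC) => // l [nu [[h0 _ _] _ ->]].
by rewrite h0.
Qed.

Lemma gf_le nu x : fuzzy_submodule inf P nu -> (forall y, P y -> f y <= nu y) -> gen x <= nu x.
Proof. by move=> h1 h2; apply: (inf_lb hC) => //; exists nu. Qed.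

Lemma gfD x y : P x -> P y -> Order.meet (gen x) (gen y) <= gen (x + y).
Proof.
move=> hx hy; apply: (inf_glb hC) => // l [nu [hnu hf ->]].
apply: (@le_trans _ _ (Order.meet (nu x) (nu y))); last by case: hnu => _ h _; apply: h.
by apply: leI2; apply: gf_le.
Qed.

Lemma gfZ a x : P x -> gen x <= gen (scalec a x).
Proof.
move=> hx; apply: (inf_glb hC) => // l [nu [hnu hf ->]].
apply: (@le_trans _ _ (nu x)); first exact: gf_le.
by case: hnu => _ _ h; apply: h.
Qed.

Lemma gf_glb m x : (forall nu, fuzzy_submodule inf P nu -> (forall y, P y -> f y <= nu y) -> m <= nu x) ->
  m <= gen x.
Proof. by move=> h; apply: (inf_glb hC) => // l [nu [hnu hf ->]]; apply: h. Qed.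
End GF.

Local Notation kappa d := (kappa Delta (R:=R) sup inf mu d).
Local Notation zeta d := (zeta Delta (R:=R) sup inf mu d).
Local Notation beta d := (beta Delta (R:=R) sup inf mu d).

Lemma scale0c (c : chain) : scalec 0 c = 0.
Proof. by apply/ffunP => t; rewrite !ffunE mul0r. Qed.

Definition mb (x : chain) (r : seq {set 'I_n}) : L :=
  foldr (fun s acc => Order.meet (if x s != 0 then mu s else top) acc) top r.

Lemma mb_nonbot d x r : Cd Delta d x -> mb x r <> bot.
Proof.
move=> /forallP hx; case: hZ => htb hp.
elim: r => [|s r IH] /=; first by move=> e; apply: htb.
move=> /hp [|//].
case: ifP => hs; last by move=> e; apply: htb.
by have /andP[hsD _] := implyP (hx s) hs; apply: hmu.
Qed.

Lemma kappa_nonbot d x : Cd Delta d x -> kappa d x <> bot.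
Proof.
move=> hx; apply: (@nonbot_le _ _ _ _ hC (mb x (index_enum _))); last exact: mb_nonbot hx.
apply: gf_glb => nu hnu hf.
rewrite [X in nu X]chain_decomp.
have hterm : forall s, Cd Delta d (scalec (x s) (elem R s)).
  move=> s; have [e|ne] := eqVneq (x s) 0.
    by rewrite e scale0c; exact: Cd0.
  have /andP[hsD /eqP hc] := implyP (forallP hx s) ne.
  by apply: CdZ; apply: elemCd.
elim: (index_enum _) => [|s r IH] /=.
  by rewrite big_nil; case: hnu => -> _ _.
rewrite big_cons.
have hr : Cd Delta d (\sum_(j <- r) scalec (x j) (elem R j)).
  by elim: r {IH} => [|s' r' IH']; rewrite ?big_nil ?big_cons ?Cd0 // CdD.
apply: (@le_trans _ _ (Order.meet (nu (scalec (x s) (elem R s))) (nu (\sum_(j <- r) scalec (x j) (elem R j)))));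
  last by case: hnu => _ h _; apply: h.
apply: leI2 => //.
case: ifP => hs; last first.
  move/negbFE/eqP: hs => ->; rewrite scale0c.
  by case: hnu => -> _ _; exact: (le_top hC).
have /andP[hsD /eqP hc] := implyP (forallP hx s) hs.
apply: (@le_trans _ _ (nu (elem R s))); last by case: hnu => _ _ h; apply: h; apply: elemCd.
apply: (@le_trans _ _ (delta Delta sup mu d (elem R s))); last by apply: hf; apply: elemCd.
by apply: (sup_ub hC) => //; exists s.
Qed.

Lemma zeta_supp d y : zeta d y <> bot <-> Zd Delta d y.
Proof.
rewrite /Defs.zeta; case: ifP => h; split => //.
by move=> _; apply: kappa_nonbot; case/andP: h.
Qed.

Lemma beta_supp d y : beta d y <> bot <-> Bd Delta (R:=R) d y.
Proof.
rewrite /Defs.beta; split.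
- case: ifP => hy hb //.
  case: (classic (Bd Delta (R:=R) d y)) => // nB; exfalso; apply: hb.
  set T := (fun l => _).
  have -> : sup T = bot.
    apply: (le_bot hC); apply: (sup_lub hC) => l [a [ha hba _]].
    by exfalso; apply: nB; exists a.
  exact: (meet_bot hC).
- move=> [a ha hba]; rewrite -hba bdCd => e.
  case: hZ => _ /(_ _ _ e) [].
    by apply: kappa_nonbot; apply: bdCd.
  apply: (@nonbot_le _ _ _ _ hC (kappa d.+1 a)); last exact: kappa_nonbot.
  by apply: (sup_ub hC); exists a.
Qed.

Lemma claim1 d x : gen_sub (supp sup (zeta d)) x <-> Zd Delta d x.
Proof. by apply: (@gen_sub_eq _ _ _ (fun x => is_true (Zd Delta d x))); [exact: Zsub | move=> y; apply: zeta_supp]. Qed.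

Lemma claim2 d x : gen_sub (supp sup (beta d)) x <-> Bd Delta (R:=R) d x.
Proof. by apply: gen_sub_eq; [exact: Bsub | move=> y; apply: beta_supp]. Qed.

Definition E d (h : chain) := sup (fun l => exists2 z, Bd Delta (R:=R) d (z - h) & l = zeta d z).

Lemma eta_E d h : eta_hom Delta sup inf mu d h = E d h.
Proof.
apply: (sup_ext hC) => l; split.
- by move=> [z [/claim2 hz ->]]; exists z.
- by move=> [z hz ->]; exists z; split => //; apply/claim2.
Qed.

Lemma zetaD d (m m' : chain) : Order.meet (zeta d m) (zeta d m') <= zeta d (m + m').
Proof.
rewrite /Defs.zeta.
case: ifP => hm; last by rewrite (bot_meet hC) (bot_le hC).
case: ifP => hm'; last by rewrite (meet_bot hC) (bot_le hC).
have -> : Zd Delta d (m + m') by case: (Zsub n Delta R d) => _ h _; apply: h.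
by apply: gfD; [case/andP: hm | case/andP: hm'].
Qed.

Lemma zetaZ d a (m : chain) : zeta d m <= zeta d (scalec a m).
Proof.
rewrite /Defs.zeta; case: ifP => hm; last exact: (bot_le hC).
have -> : Zd Delta d (scalec a m) by case: (Zsub n Delta R d) => _ _ h; apply: h.
by apply: gfZ; case/andP: hm.
Qed.

Lemma zeta0 d : zeta d 0 = top.
Proof.
rewrite /Defs.zeta; have -> : Zd Delta d (0 : chain) by case: (Zsub n Delta R d).
exact: gf0.
Qed.

Lemma B0 d : Bd Delta (R:=R) d 0.
Proof. by case: (Bsub n Delta R d). Qed.

Lemma E_ge d h : zeta d h <= E d h.
Proof. by apply: (sup_ub hC); exists h => //; rewrite subrr; apply: B0. Qed.

Lemma main_sec d :
  let Z := Zd Delta (R:=R) d in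
  let B := Bd Delta (R:=R) d in
  let eta_d := eta_hom Delta (R:=R) sup inf mu d in
  [/\ (forall x, gen_sub (supp sup (Defs.zeta Delta (R:=R) sup inf mu d)) x <-> Z x),
      (forall x, gen_sub (supp sup (Defs.beta Delta (R:=R) sup inf mu d)) x <-> B x),
      fuzzy_submodule inf Z eta_d,
      (forall h, Z h ->
         eta_d h = sup (fun l => exists2 z, B (z - h) & l = Defs.zeta Delta sup inf mu d z) /\
         eta_d h = sup (fun l => exists2 z, B (z - h) & l = Defs.kappa Delta sup inf mu d z)) &
      (forall h, Z h -> botL sup < eta_d h)].
Proof.
move=> Z B eta_d; rewrite /Z /B /eta_d {Z B eta_d}; split.
- exact: claim1.
- exact: claim2.
- split.
  + rewrite eta_E; apply/le_anti; rewrite (le_top hC) /= -(zeta0 d); exact: E_ge.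
  + move=> x y _ _; rewrite !eta_E /E.
    rewrite (meet_sup hC); apply: (sup_lub hC) => l [l' [m hm ->] ->].
    rewrite meetC (meet_sup hC); apply: (sup_lub hC) => l3 [l2 [m2 hm2 ->] ->].
    apply: le_trans (zetaD d m m2) _; apply: (sup_ub hC); exists (m + m2) => //.
    have -> : m + m2 - (x + y) = (m - y) + (m2 - x).
      by rewrite opprD [- x + - y]addrC addrACA.
    by case: (Bsub n Delta R d) => _ hadd _; apply: hadd.
  + move=> a x _; rewrite !eta_E; apply: (sup_lub hC) => l [m hm ->].
    apply: le_trans (zetaZ d a m) _; apply: (sup_ub hC); exists (scalec a m) => //.
    have -> : scalec a m - scalec a x = scalec a (m - x).
      by apply/ffunP => t; rewrite !ffunE mulrBr.
    by case: (Bsub n Delta R d) => _ _ hs; apply: hs.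
- move=> h hh; rewrite eta_E; split => //.
  apply: (sup_ext hC) => l; split => -[z hz ->]; exists z => //; rewrite /Defs.zeta.
    have hz' : Zd Delta d z.
      have -> : z = (z - h) + h by rewrite subrK.
      by case: (Zsub n Delta R d) => _ hadd _; apply: hadd => //; apply: BZ.
    by rewrite hz'.
  have hz' : Zd Delta d z.
    have -> : z = (z - h) + h by rewrite subrK.
    by case: (Zsub n Delta R d) => _ hadd _; apply: hadd => //; apply: BZ.
  by rewrite hz'.
- move=> h hh; rewrite eta_E lt_neqAle (bot_le hC) andbT; apply/eqP => e.
  apply: (@kappa_nonbot d h); first by case/andP: hh.
  apply: (le_bot hC); rewrite e; have := E_ge d h; by rewrite /Defs.zeta hh.
Qed.
End Fuzzy.

Theorem mainTheorem12 (n : nat) (Delta : {set {set 'I_n}}) (R : idomainType)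
    (disp : Order.disp_t) (L : latticeType disp) (sup inf : (L -> Prop) -> L)
    (mu : {set 'I_n} -> L) (d : nat) :
  simplicial_complex Delta ->
  PID R ->
  CDL sup inf ->
  zero_meet_prime sup inf ->
  fuzzy_subcomplex Delta mu ->
  (forall sigma, sigma \in Delta -> mu sigma <> botL sup) ->
  let Z := Zd Delta (R:=R) d in
  let B := Bd Delta (R:=R) d in
  let eta_d := eta_hom Delta (R:=R) sup inf mu d in
  [/\ (forall x, gen_sub (supp sup (zeta Delta (R:=R) sup inf mu d)) x <-> Z x),
      (forall x, gen_sub (supp sup (beta Delta (R:=R) sup inf mu d)) x <-> B x),
      fuzzy_submodule inf Z eta_d,
      (forall h, Z h ->
         eta_d h = sup (fun l => exists2 z, B (z - h) & l = zeta Delta sup inf mu d z) /\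
         eta_d h = sup (fun l => exists2 z, B (z - h) & l = kappa Delta sup inf mu d z)) &
      (forall h, Z h -> botL sup < eta_d h)].
Proof. by move=> hsc _ hC hZ _ hmu; apply: main_sec. Qed.
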